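(* Let $G$ be a finite Abelian group of odd cardinality. Then $\mathrm{ms}_r(G)=\widetilde{\mathrm{ms}}_r(G)>\frac{1}{r^2}$ for every integer $r\ge 2$.
   Context: $G$ is written additively and carries its normalized counting (Haar) measure $\mu(A)=|A|/|G|$. For $A\subset G$ let $\mathrm{ms}(A)=\max_{c\in G}\mu(A\cap(2c-A))$ (symmetry with respect to central symmetries $x\mapsto 2c-x$) and $\widetilde{\mathrm{ms}}(A)=\max_{c\in G}\mu(A\cap(c-A))$ (symmetry with respect to quasi-central symmetries $x\mapsto c-x$). For an integer $r\ge1$, $\mathrm{ms}_r(G)=\min_\chi\max_{i<r}\mathrm{ms}(\chi^{-1}(i))$ and $\widetilde{\mathrm{ms}}_r(G)=\min_\chi\max_{i<r}\widetilde{\mathrm{ms}}(\chi^{-1}(i))$, the minima over all colorings $\chi:G\to\{0,\dots,r-1\}$. *)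

(* Defs.v *)
From mathcomp Require Import all_boot all_order all_algebra.
Set Implicit Arguments. Unset Strict Implicit. Unset Printing Implicit Defensive.
Import Order.TTheory GRing.Theory Num.Theory.
Local Open Scope ring_scope.

Definition mu (G : finZmodType) (A : {set G}) : rat := (#|A|%:R / #|G|%:R)%R.

Definition csym (G : finZmodType) (c : G) (A : {set G}) : {set G} :=
  [set c *+ 2 - x | x in A].
Definition qsym (G : finZmodType) (c : G) (A : {set G}) : {set G} :=
  [set c - x | x in A].

(* ms(A) = max_c mu(A ∩ (2c - A)) ; values are >= 0 so 0 is a neutral start *)
Definition ms (G : finZmodType) (A : {set G}) : rat :=
  \big[Num.max/0]_(c : G) mu (A :&: csym c A).
Definition msq (G : finZmodType) (A : {set G}) : rat :=
  \big[Num.max/0]_(c : G) mu (A :&: qsym c A).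

Definition cls (G : finZmodType) (r : nat) (chi : {ffun G -> 'I_r}) (i : 'I_r)
  : {set G} := [set x | chi x == i].

(* ms_r(G) = min_chi max_{i<r} ms(chi^{-1}(i)); all values lie in [0,1],
   so 1 is a neutral start for the min (and colorings exist for r >= 1). *)
Definition ms_r (G : finZmodType) (r : nat) : rat :=
  \big[Num.min/1]_(chi : {ffun G -> 'I_r})
     \big[Num.max/0]_(i : 'I_r) ms (cls chi i).
Definition msq_r (G : finZmodType) (r : nat) : rat :=
  \big[Num.min/1]_(chi : {ffun G -> 'I_r})
     \big[Num.max/0]_(i : 'I_r) msq (cls chi i).

(* Main.v *)
Require Import Defs.
From mathcomp Require Import all_boot all_order all_algebra fingroup cyclic.
From mathcomp Require Import zify.
Set Implicit Arguments. Unset Strict Implicit. Unset Printing Implicit Defensive.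
Import Order.TTheory GRing.Theory Num.Theory.
Local Open Scope ring_scope.
Lemma inv_parity (T : finType) (s : T -> T) : involutive s ->
  forall n (S : {set T}), (#|S| <= n)%N -> {in S, forall x, s x \in S} ->
  odd #|S| = odd #|[set x in S | s x == x]|.
Proof.
move=> hs; elim=> [|n IH] S.
  rewrite leqn0 => /eqP /cards0_eq -> _; rewrite cards0.
  suff -> : [set x in set0 | s x == x] = set0 by rewrite cards0.
  by apply/setP=> x; rewrite !inE.
move=> hn hS.
case: (pickP [pred x in S | s x != x]) => [x /andP [xS nx] | hnone]; last first.
  congr odd; apply: eq_card => y; rewrite inE; case yS: (y \in S) => //=.
  by have := hnone y; rewrite /= yS /= => /negbFE.
have sxS := hS x xS.
have sxx : s x != x by [].
set S' := S :\ x :\ s x.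
have cS : #|S| = (#|S'| + 2)%N.
  rewrite (cardsD1 x S) xS (cardsD1 (s x) (S :\ x)) !inE sxx sxS /=.
  by rewrite /S' add1n addn2.
have fE : [set y in S' | s y == y] = [set y in S | s y == y].
  apply/setP=> y; rewrite !inE; apply/idP/idP => [/andP[/andP[_ /andP[_ ->]] ->]//|/andP[yS /eqP fy]].
  rewrite yS fy eqxx !andbT; apply/andP; split.
    by apply: contra sxx => /eqP e; rewrite -e -(hs x) -e fy eqxx.
  by apply: contra sxx => /eqP e; rewrite -e fy eqxx.
rewrite -fE cS addn2 /= negbK; apply: IH.
  by move: hn; rewrite cS addn2 ltnS => /ltnW.
move=> y; rewrite !inE => /andP[ysx /andP[yx yS]].
rewrite hS // andbT; apply/andP; split.
  by apply: contra yx => /eqP e; rewrite -(hs y) e hs.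
by apply: contra ysx => /eqP e; rewrite -(hs y) e.
Qed.
Local Open Scope ring_scope.

Lemma mulcard (G : finZmodType) (x : G) : x *+ #|G| = 0.
Proof. by rewrite -FinRing.zmodXgE -cardsT expg_cardG ?inE. Qed.

Lemma dhalfK {G : finZmodType} (x : G) : odd #|G| -> (x *+ 2) *+ (#|G|.+1)./2 = x.
Proof.
move=> oG; rewrite -mulrnA.
have -> : (2 * (#|G|.+1)./2 = #|G| + 1)%N.
  have e := odd_double_half (#|G|.+1); rewrite /= oG /= add0n in e.
  by rewrite mul2n e addn1.
by rewrite mulrnDr mulcard add0r.
Qed.

Lemma dbl_inj (G : finZmodType) : odd #|G| -> injective (fun x : G => x *+ 2).
Proof. by move=> oG x y /= h; rewrite -(dhalfK x oG) -(dhalfK y oG) h. Qed.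

Lemma le_bigmax (I : finType) (F : I -> rat) i : F i <= \big[Num.max/0]_j F j.
Proof.
have : i \in index_enum I by rewrite mem_index_enum.
elim: (index_enum I) => //= j s IH; rewrite inE big_cons => /orP [/eqP->|/IH h].
  by rewrite le_max lexx.
by rewrite le_max h orbT.
Qed.

Lemma bigmax_le (I : finType) (F : I -> rat) x :
  0 <= x -> (forall i, F i <= x) -> \big[Num.max/0]_j F j <= x.
Proof. by move=> h0 h; apply: (big_ind (fun y => y <= x)) => // a b ha hb; rewrite ge_max ha hb. Qed.

Lemma lt_bigmin (I : finType) (F : I -> rat) x :
  x < 1 -> (forall i, x < F i) -> x < \big[Num.min/1]_j F j.
Proof. by move=> h0 h; apply: (big_ind (fun y => x < y)) => // a b ha hb; rewrite lt_min ha hb. Qed.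

Lemma mu_ge0 (G : finZmodType) (A : {set G}) : 0 <= mu A.
Proof. by rewrite /mu divr_ge0 ?ler0n. Qed.

Lemma msq_ge0 (G : finZmodType) (A : {set G}) : 0 <= msq A.
Proof. apply: le_trans (mu_ge0 (A :&: qsym 0 A)) _; exact: (le_bigmax (fun c => mu (A :&: qsym c A)) 0). Qed.
Lemma ms_ge0 (G : finZmodType) (A : {set G}) : 0 <= ms A.
Proof. apply: le_trans (mu_ge0 (A :&: csym 0 A)) _; exact: (le_bigmax (fun c => mu (A :&: csym c A)) 0). Qed.

Lemma ms_msq (G : finZmodType) (A : {set G}) : odd #|G| -> ms A = msq A.
Proof.
move=> oG; apply/le_anti/andP; split.
  apply: bigmax_le => [|c]; first exact: msq_ge0.
  exact: (le_bigmax (fun c => mu (A :&: qsym c A)) (c *+ 2)).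
apply: bigmax_le => [|c]; first exact: ms_ge0.
have := le_bigmax (fun c => mu (A :&: csym c A)) (c *+ (#|G|.+1)./2).
by rewrite /csym -mulrnAC dhalfK.
Qed.
Lemma mem_qsym (G : finZmodType) (c : G) (A : {set G}) x :
  (x \in qsym c A) = (c - x \in A).
Proof.
have K : forall y : G, c - (c - y) = y by move=> y; rewrite opprB addrC subrK.
rewrite /qsym; apply/imsetP/idP => [[y yA ->]|h]; first by rewrite K.
by exists (c - x); rewrite ?K.
Qed.

Lemma card_setI_sum (T : finType) (A B : {set T}) :
  #|A :&: B| = (\sum_(x in A) (x \in B))%N.
Proof.
rewrite -sum1_card (eq_bigl (fun x => (x \in A) && (x \in B))); last by move=> x; rewrite inE.
by rewrite big_mkcondr /=; apply: eq_bigr => x _; case: (x \in B).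
Qed.

Lemma sum_f (G : finZmodType) (A : {set G}) :
  (\sum_(c : G) #|A :&: qsym c A| = #|A| * #|A|)%N.
Proof.
under eq_bigr => c _ do rewrite card_setI_sum.
rewrite exchange_big /= -sum_nat_const; apply: eq_bigr => x xA.
under eq_bigr => c _ do rewrite mem_qsym.
rewrite (reindex_inj (addIr x)) /=.
under eq_bigr => c _ do rewrite addrK.
by rewrite -sum1_card [RHS]big_mkcond /=; apply: eq_bigr => c _; case: (c \in A).
Qed.

Lemma f_parity (G : finZmodType) (A : {set G}) c :
  odd #|A :&: qsym c A| = odd #|[set x in A :&: qsym c A | c - x == x]|.
Proof.
have hs : involutive (fun x : G => c - x) by move=> y; rewrite opprB addrC subrK.
apply: (inv_parity hs (leqnn _)) => x; rewrite !inE !mem_qsym => /andP[h1 h2].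
by rewrite h2 hs h1.
Qed.

Lemma fixE (G : finZmodType) (c x : G) : (c - x == x) = (x *+ 2 == c).
Proof. by rewrite subr_eq mulr2n eq_sym. Qed.

Lemma f_odd (G : finZmodType) (A : {set G}) a : odd #|G| -> a \in A ->
  odd #|A :&: qsym (a *+ 2) A|.
Proof.
move=> oG aA; rewrite f_parity.
suff -> : [set x in A :&: qsym (a *+ 2) A | a *+ 2 - x == x] = [set a] by rewrite cards1.
apply/setP=> y; rewrite !inE mem_qsym fixE; apply/idP/idP.
  by move=> /andP[_ /eqP /(dbl_inj oG) ->].
move=> /eqP ->; rewrite eqxx andbT aA /=.
by rewrite mulr2n addrK.
Qed.

Lemma f_even (G : finZmodType) (A : {set G}) c :
  c \notin [set x *+ 2 | x in A] -> ~~ odd #|A :&: qsym c A|.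
Proof.
move=> cn; rewrite f_parity.
suff -> : [set x in A :&: qsym c A | c - x == x] = set0 by rewrite cards0.
apply/setP=> y; rewrite !inE fixE; apply/negP => /andP[/andP[yA _] /eqP e].
by move/imsetP: cn; apply; exists y.
Qed.

Lemma sum_cls (G : finZmodType) r (chi : {ffun G -> 'I_r}) :
  (\sum_(i : 'I_r) #|cls chi i| = #|G|)%N.
Proof.
rewrite -[RHS]sum1_card.
transitivity (\sum_(i : 'I_r) \sum_(x : G) (chi x == i))%N.
  apply: eq_bigr => i _; rewrite -sum1_card big_mkcond /=.
  by apply: eq_bigr => x _; rewrite /cls inE; case: (chi x == i).
rewrite exchange_big /=; apply: eq_big => [x//|x _].
rewrite (bigD1 (chi x)) //= eqxx big1 // => i /negbTE; by rewrite eq_sym => ->.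
Qed.

Lemma pigeon (G : finZmodType) r (chi : {ffun G -> 'I_r}) : (0 < r)%N ->
  exists i, (#|G| <= #|cls chi i| * r)%N.
Proof.
move=> r0; case: (boolP [exists i, #|G| <= #|cls chi i| * r]%N) => [/existsP//|/existsPn H].
have h : (\sum_(i : 'I_r) #|cls chi i| * r <= \sum_(i : 'I_r) (#|G| - 1))%N.
  apply: leq_sum => i _; have := H i; rewrite -ltnNge => h; by rewrite -ltnS subn1 prednK // (leq_ltn_trans _ h).
rewrite -big_distrl /= sum_cls sum_nat_const card_ord in h.
have G0 : (0 < #|G|)%N by apply/card_gt0P; exists 0.
have key : forall n, (0 < n)%N -> (n * r <= r * (n - 1))%N -> False by move=> n; clear -r0; nia.
by exfalso; apply: (key #|G|) G0 _; exact: h.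
Qed.

Lemma big_class (G : finZmodType) (A : {set G}) r : odd #|G| -> (2 <= r)%N ->
  (#|G| <= #|A| * r)%N -> exists c, (#|G| < #|A :&: qsym c A| * r ^ 2)%N.
Proof.
move=> oG r2 hA.
case: (boolP [exists c, #|G| < #|A :&: qsym c A| * r ^ 2]%N) => [/existsP//|/existsPn H].
exfalso.
pose g c := (#|A :&: qsym c A| * r ^ 2)%N.
have hg : forall c, (g c <= #|G|)%N by move=> c; have := H c; rewrite -leqNgt.
have hs : (\sum_(c : G) g c = #|A| * #|A| * r ^ 2)%N by rewrite -big_distrl /= sum_f.
have hle : (#|A| * #|A| * r ^ 2 <= #|G| * #|G|)%N.
  rewrite -hs (@leq_trans (\sum_(c : G) #|G|)) //; first by apply: leq_sum => c _; apply: hg.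
  by rewrite sum_nat_const.
have G0 : (0 < #|G|)%N by apply/card_gt0P; exists 0.
have eqA : (#|A| * r = #|G|)%N by move: hle hA; clear -G0; nia.
have A0 : (0 < #|A|)%N by move: eqA G0; clear; nia.
have AG : (#|A| < #|G|)%N by move: eqA A0 r2; clear; nia.
have hsum : (\sum_(c : G) (#|G| - g c) = 0)%N.
  rewrite sumnB; last by move=> c _; apply: hg.
  rewrite hs sum_nat_const.
  apply/eqP; rewrite subn_eq0.
  have key : forall n m, (m * r = n)%N -> (n * n <= m * m * r ^ 2)%N by move=> n m <-; nia.
  exact: key eqA.
have allg : forall c, g c = #|G|.
  move=> c; have /eqP := hsum; rewrite sum_nat_eq0 => /forallP /(_ c) /=.
  by rewrite subn_eq0 => h; apply/eqP; rewrite eqn_leq hg.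
case/card_gt0P: A0 => a aA.
pose D := [set x *+ 2 | x in A].
have cD : #|D| = #|A| by rewrite card_imset //; apply: dbl_inj.
have [c1 c1D] : exists c, c \notin D.
  case: (boolP [exists c, c \notin D]) => [/existsP//|/existsPn H2].
  have : [set: G] \subset D by apply/subsetP => x _; have := H2 x; rewrite negbK.
  by move/subset_leq_card; rewrite cardsT cD leqNgt AG.
have o1 := f_odd oG aA. have o2 := f_even c1D.
have e : #|A :&: qsym (a *+ 2) A| = #|A :&: qsym c1 A|.
  apply/eqP; rewrite -(eqn_pmul2r (_ : 0 < r ^ 2)%N) ?expn_gt0 ?(leq_trans _ r2) //.
  by rewrite -/(g _) -/(g _) !allg.
by move: o2; rewrite -e o1.
Qed.

Lemma msq_bound (G : finZmodType) (r : nat) (chi : {ffun G -> 'I_r}) :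
  odd #|G| -> (2 <= r)%N ->
  1 / (r%:R ^+ 2) < \big[Num.max/0]_(i : 'I_r) msq (cls chi i).
Proof.
move=> oG r2.
have [i hi] := pigeon chi (leq_trans (isT : (0 < 2)%N) r2).
have [c hc] := big_class oG r2 hi.
apply: lt_le_trans (le_bigmax (fun i => msq (cls chi i)) i).
apply: lt_le_trans (le_bigmax (fun c => mu (cls chi i :&: qsym c (cls chi i))) c).
have G0 : (0 < #|G|)%N by apply/card_gt0P; exists 0.
have r0 : (0 < r)%N by apply: leq_trans r2.
rewrite /mu ltr_pdivlMr ?ltr0n // mul1r mulrC ltr_pdivrMr ?exprn_gt0 ?ltr0n //.
by rewrite -natrX -natrM ltr_nat.
Qed.

Unset Implicit Arguments.

Theorem theorem7p6 (G : finZmodType) (r : nat) :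
  odd #|G| -> (2 <= r)%N ->
  ms_r G r = msq_r G r /\ 1 / (r%:R ^+ 2) < ms_r G r.
Proof.
move=> oG r2.
have E : ms_r G r = msq_r G r.
  by apply: eq_bigr => chi _; apply: eq_bigr => i _; apply: ms_msq.
split=> //; rewrite E; apply: lt_bigmin => [|chi]; last exact: msq_bound.
rewrite ltr_pdivrMr ?exprn_gt0 ?ltr0n ?(leq_trans _ r2) // mul1r.
rewrite -natrX ltr1n; clear -r2; nia.
Qed.
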